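(* Assume the setting below and suppose $\tau=0$. Then (with probability one) the iterates $x_k$ converge to a limit $\bar x$ with $\bar x^{(1)}=0$.
   Context: Let $n\ge2$, $a\ge\sqrt{n-1}$, $f(x)=a|x^{(1)}|+\sum_{i=2}^n x^{(i)}$ on $\mathbb{R}^n$ ($x^{(i)}$ the $i$-th coordinate), $0<c_1<c_2<1$, and $\tau=c_1+\frac{(n-1)(c_1-1)}{a^2}$. The initial point $x_0$ is drawn from the normal distribution on $\mathbb{R}^n$ (independently of $a$), and $x_{k+1}=x_k+t_kd_k$, $d_k=-\nabla f(x_k)$, where $t_k$ is returned by the following Armijo–Wolfe bracketing line search: set $\alpha=0$, $\beta=+\infty$, $t=1$; repeat: if $A(t)$ fails set $\beta\leftarrow t$; else if $W(t)$ fails set $\alpha\leftarrow t$; else stop and return $t$; then if $\beta<+\infty$ set $t\leftarrow(\alpha+\beta)/2$, otherwise $t\leftarrow2\alpha$. Here $A(t)$: $f(x_k+td_k)\le f(x_k)+c_1t\nabla f(x_k)^Td_k$, and $W(t)$: $f$ is differentiable at $x_k+td_k$ and $\nabla f(x_k+td_k)^Td_k\ge c_2\nabla f(x_k)^Td_k$. All statements are understood to hold with probability one. *)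

(* Defs.v *)
From HB Require Import structures.
From mathcomp Require Import all_boot all_order all_algebra.
From mathcomp Require Import all_classical all_reals all_analysis.
Set Implicit Arguments. Unset Strict Implicit. Unset Printing Implicit Defensive.
Import Order.TTheory GRing.Theory Num.Theory.
Import numFieldNormedType.Exports.
Local Open Scope classical_set_scope.
Local Open Scope ring_scope.

Section Defs.
Variable R : realType.

(* Points of R^n are row vectors 'rV[R]_n; coordinate x^(i+1) is  x 0 i
   (so the paper's first coordinate x^(1) is the entry of index 0). *)

Definition fobj (n : nat) (a : R) (x : 'rV[R]_n) : R :=
  a * `| \sum_(i < n | val i == 0%N) x 0 i | + \sum_(i < n | val i != 0%N) x 0 i.

Definition dotv (n : nat) (u v : 'rV[R]_n) : R := \sum_(i < n) u 0 i * v 0 i.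

Definition grad (n : nat) (f : 'rV[R]_n -> R) (x : 'rV[R]_n) : 'rV[R]_n :=
  \row_(i < n) ('D_(delta_mx 0 i) f x).

Definition armijo (n : nat) (f : 'rV[R]_n -> R) (c1 : R) (x d : 'rV[R]_n) (t : R) : Prop :=
  f (x + t *: d) <= f x + c1 * t * dotv (grad f x) d.

Definition wolfe (n : nat) (f : 'rV[R]_n -> R) (c2 : R) (x d : 'rV[R]_n) (t : R) : Prop :=
  differentiable f (x + t *: d) /\
  dotv (grad f (x + t *: d)) d >= c2 * dotv (grad f x) d.

(* State of the bracketing line search: (alpha, beta, t), beta = None
   standing for beta = +infinity. *)
Definition ls_step (n : nat) (f : 'rV[R]_n -> R) (c1 c2 : R) (x d : 'rV[R]_n)
    (st : R * option R * R) : R * option R * R :=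
  let: (al, be, t) := st in
  let: (al', be') :=
    if ~~ `[< armijo f c1 x d t >] then (al, Some t)
    else if ~~ `[< wolfe f c2 x d t >] then (t, be)
    else (al, be) in
  (al', be', match be' with Some b => (al' + b) / 2 | None => 2 * al' end).

(* k-th state of the line search; the k-th trial step is its last component. *)
Definition ls_state (n : nat) (f : 'rV[R]_n -> R) (c1 c2 : R) (x d : 'rV[R]_n)
    (k : nat) : R * option R * R :=
  iter k (ls_step f c1 c2 x d) (0, None, 1).

Definition ls_returns (n : nat) (f : 'rV[R]_n -> R) (c1 c2 : R) (x d : 'rV[R]_n)
    (t : R) : Prop :=
  exists k : nat,
    (ls_state f c1 c2 x d k).2 = t /\ armijo f c1 x d t /\ wolfe f c2 x d t /\
    forall j : nat, (j < k)%N ->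
      ~ (armijo f c1 x d (ls_state f c1 c2 x d j).2 /\
         wolfe f c2 x d (ls_state f c1 c2 x d j).2).

Definition gd_iterates (n : nat) (f : 'rV[R]_n -> R) (c1 c2 : R)
    (x0 : 'rV[R]_n) (xs : nat -> 'rV[R]_n) : Prop :=
  xs 0%N = x0 /\
  (forall k, differentiable f (xs k)) /\
  forall k, exists t : R,
    ls_returns f c1 c2 (xs k) (- grad f (xs k)) t /\
    xs k.+1 = xs k + t *: (- grad f (xs k)).

(* Lebesgue-null subsets of R^n: for every eps > 0 they can be covered by
   countably many closed boxes [lo_k, hi_k] of total volume at most eps.
   (Null sets of any nondegenerate normal distribution on R^n are exactly
   these sets.) *)
Definition lebesgue_null (n : nat) (S : set 'rV[R]_n) : Prop :=
  forall eps : R, 0 < eps ->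
  exists lo hi : nat -> 'rV[R]_n,
    (forall k (i : 'I_n), lo k 0 i <= hi k 0 i) /\
    S `<=` \bigcup_k [set y | forall i : 'I_n, lo k 0 i <= y 0 i <= hi k 0 i] /\
    forall N : nat, \sum_(k < N) \prod_(i < n) (hi k 0 i - lo k 0 i) <= eps.

(* "P holds with probability one for x0 drawn from the normal distribution". *)
Definition almost_surely (n : nat) (P : 'rV[R]_n -> Prop) : Prop :=
  lebesgue_null [set x0 | ~ P x0].

End Defs.

(* Main.v *)
Require Import Defs.
From HB Require Import structures.
From mathcomp Require Import all_boot all_order all_algebra.
From mathcomp Require Import all_classical all_reals all_analysis.
From mathcomp Require Import ring lra.
Import Order.TTheory GRing.Theory Num.Theory.
Import numFieldNormedType.Exports.
Local Open Scope classical_set_scope.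
Local Open Scope ring_scope.
Section Grad.
Context {R : realType} (n : nat) (a : R).

Lemma fobjE (x : 'rV[R]_n.+1) :
  fobj a x = a * `|x 0 ord0| + \sum_(i < n) x 0 (lift ord0 i).
Proof.
rewrite /fobj big_mkcond big_ord_recl /= big1 ?addr0; last by move=> i _.
congr (_ + _); rewrite big_mkcond big_ord_recl /=.
by rewrite add0r; apply: eq_bigr => i _.
Qed.

Lemma sg_near (c z : R) : `|c - z| < `|c| -> Num.sg z = Num.sg c.
Proof.
have [c0|c0|->] := ltrgtP c 0.
- rewrite (ltr0_norm c0) => h.
  have : z < 0.
    by move: h; rewrite ltr_norml => /andP[h1 h2]; lra.
  by move=> z0; rewrite (ltr0_sg z0) (ltr0_sg c0).
- rewrite (gtr0_norm c0) => h.
  have : 0 < z.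
    by move: h; rewrite ltr_norml => /andP[h1 h2]; lra.
  by move=> z0; rewrite (gtr0_sg z0) (gtr0_sg c0).
- by rewrite normr0 ltNge normr_ge0.
Qed.

Lemma near_sg (y : 'rV[R]_n.+1) : y 0 ord0 != 0 ->
  \forall z \near y, Num.sg ((z : 'rV[R]_n.+1) 0 ord0) = Num.sg (y 0 ord0).
Proof.
move=> y0.
have := @coord_continuous R 1 n.+1 0 ord0 y.
move/cvgrPdist_lt => /(_ `|y 0 ord0|); rewrite normr_gt0 => /(_ y0).
apply: filterS => z; exact: sg_near.
Qed.

Definition wgt (s : R) : 'rV[R]_n.+1 := \row_(i < n.+1) (if val i == 0%N then a * s else 1).
Definition Lf (s : R) (z : 'rV[R]_n.+1) : R := \sum_(i < n.+1) wgt s 0 i * z 0 i.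

Lemma near_fL (y : 'rV[R]_n.+1) : y 0 ord0 != 0 ->
  \forall z \near y, fobj a z = Lf (Num.sg (y 0 ord0)) z.
Proof.
move=> y0; near=> z.
have hz : Num.sg (z 0 ord0) = Num.sg (y 0 ord0) by near: z; exact: near_sg.
rewrite fobjE /Lf big_ord_recl /= !mxE /= -hz.
rewrite normrEsg mulrA; congr (_ + _).
by apply: eq_bigr => i _; rewrite !mxE /= mul1r.
Unshelve. all: by end_near. Qed.

Lemma derive_Lf s (y v : 'rV[R]_n.+1) : 'D_v (Lf s) y = Lf s v.
Proof.
rewrite /derive. apply: lim_near_cst; first exact: norm_hausdorff.
near=> h.
have hn : h != 0 by near: h; exact: nbhs_dnbhs_neq.
rewrite /= /Lf -sumrB scaler_sumr; apply: eq_bigr => i _.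
rewrite !mxE /GRing.scale /=; field.
Unshelve. all: by end_near. Qed.


Lemma grad_fobj (y : 'rV[R]_n.+1) : y 0 ord0 != 0 ->
  grad (fobj a) y = wgt (Num.sg (y 0 ord0)).
Proof.
move=> y0; apply/rowP => i; rewrite !mxE (near_eq_derive _ (near_fL _ y0)).
rewrite derive_Lf /Lf (bigD1 i) //= big1 => [|j /negbTE ji].
  by rewrite !mxE !eqxx /= mulr1 addr0.
by rewrite !mxE eq_sym ji /= mulr0.
Qed.

Lemma diff_norm (c : R) : c != 0 -> differentiable (fun r : R => `|r|) c.
Proof.
move=> c0.
have dl : differentiable ( *:%R (Num.sg c) : R -> R) c by [].
apply/derivable1_diffP; apply: (near_eq_derivable _ (diff_derivable dl)).
have := @cvg_id _ (nbhs c).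
move/cvgrPdist_lt => /(_ `|c|); rewrite normr_gt0 => /(_ c0).
apply: filterS => r /sg_near hr /=.
by rewrite -hr normrEsg.
Qed.

Lemma diff_fobj (y : 'rV[R]_n.+1) : y 0 ord0 != 0 -> differentiable (fobj a) y.
Proof.
move=> y0.
have -> : fobj a = (fun z : 'rV[R]_n.+1 => `|z 0 ord0| *: a) +
   \sum_(i < n) (fun z : 'rV[R]_n.+1 => z 0 (lift ord0 i)).
  apply/funext => z; rewrite fobjE fct_sumE /=.
  by rewrite /GRing.scale /= mulrC.
apply: differentiableD; last first.
  by apply: differentiable_sum => i; exact: differentiable_coord.
apply: differentiableZl.
apply: (@differentiable_comp _ _ _ _ (fun z : 'rV[R]_n.+1 => z 0 ord0) (fun r : R => `|r|)).
  exact: differentiable_coord.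
exact: diff_norm.
Qed.

End Grad.

Lemma sg_sq {R : realType} (c : R) : c != 0 -> Num.sg c * Num.sg c = 1.
Proof.
by case: (ltrgtP c 0) => [c0|c0|->]; rewrite ?eqxx // ?(ltr0_sg c0) ?(gtr0_sg c0) ?mulrNN mulr1.
Qed.

Section Step.
Context {R : realType} (n : nat) (a c1 c2 : R).
Hypotheses (ha : 0 < a) (han : n%:R <= a ^+ 2) (hc2 : 0 < c2) (hc21 : c2 < 1)
  (htau : c1 * (a ^+ 2 + n%:R) = n%:R).

Lemma dot_w s s' : dotv (wgt n a s) (wgt n a s') = a ^+ 2 * s * s' + n%:R.
Proof.
rewrite /dotv big_ord_recl !mxE /=.
rewrite (eq_bigr (fun _ => 1)) => [|i _]; last by rewrite !mxE /= mulr1.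
by rewrite sumr_const card_ord; congr (_ + _); ring.
Qed.

Lemma dotvN (u v : 'rV[R]_n.+1) : dotv u (- v) = - dotv u v.
Proof. by rewrite /dotv -sumrN; apply: eq_bigr => i _; rewrite !mxE mulrN. Qed.

Variable x : 'rV[R]_n.+1.
Hypothesis x0 : x 0 ord0 != 0.
Let s := Num.sg (x 0 ord0).
Let p := `|x 0 ord0|.
Let d := - grad (fobj a) x.

Lemma p_gt0 : 0 < p. Proof. by rewrite normr_gt0. Qed.

Lemma dE : d = - wgt n a s.
Proof. by rewrite /d grad_fobj. Qed.

Lemma step0 t : (x + t *: d) 0 ord0 = s * (p - t * a).
Proof.
rewrite dE !mxE /= /GRing.scale /= /p /s.
by rewrite {1}(numEsg (x 0 ord0)); ring.
Qed.

Lemma stepS t i : (x + t *: d) 0 (lift ord0 i) = x 0 (lift ord0 i) - t.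
Proof. by rewrite dE !mxE /= /GRing.scale /= mulrN mulr1. Qed.

Lemma fobj_step t : fobj a (x + t *: d) =
  a * `|p - t * a| + \sum_(i < n) x 0 (lift ord0 i) - t * n%:R.
Proof.
rewrite fobjE step0 normrM normr_sg x0 mul1r.
under eq_bigr do rewrite stepS.
by rewrite sumrB sumr_const card_ord addrA mulr_natr.
Qed.

Lemma dot_gd : dotv (grad (fobj a) x) d = - (a ^+ 2 + n%:R).
Proof.
rewrite dE grad_fobj // dotvN dot_w -mulrA sg_sq // mulr1 //.
Qed.

Lemma armijo_iff t : 0 <= t ->
  armijo (fobj a) c1 x d t <-> t * a <= 2 * p.
Proof.
move=> t0; rewrite /armijo fobj_step dot_gd fobjE -/p.
have e : c1 * t * - (a ^+ 2 + n%:R) = - (t * n%:R).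
  by rewrite mulrN -mulrA mulrCA htau.
rewrite e.
have hp := p_gt0.
have ta0 : 0 <= t * a by rewrite mulr_ge0 // ltW.
set S := \sum_(i < n) _.
have -> : (a * `|p - t * a| + S - t * n%:R <= a * p + S + - (t * n%:R)) =
  (a * `|p - t * a| <= a * p).
  by apply/idP/idP => h; lra.
rewrite ler_pM2l // ler_norml.
split => [/andP[h1 h2]|h]; first lra.
by apply/andP; split; lra.
Qed.

Lemma wolfe_iff t : 0 <= t -> t * a != p ->
  wolfe (fobj a) c2 x d t <-> p < t * a.
Proof.
move=> t0 tp.
have y0 : (x + t *: d) 0 ord0 != 0.
  by rewrite step0 mulf_neq0 ?sgr_eq0 // subr_eq0 eq_sym.
rewrite /wolfe dot_gd grad_fobj // step0 dE dotvN dot_w.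
rewrite sgrM -/s.
have -> : a ^+ 2 * (Num.sg s * Num.sg (p - t * a)) * s = a ^+ 2 * Num.sg (p - t * a).
  by rewrite /s sgr_id -[RHS]mulr1 -(@sg_sq _ _ x0); ring.
have hn0 : 0 <= n%:R :> R by [].
split.
- move=> [_ h]; case: (ltrgtP p (t * a)) => // h1.
    move: h; rewrite (gtr0_sg _) ?subr_gt0 //.
    have : 0 < (1 - c2) * (a ^+ 2 + n%:R).
      by rewrite mulr_gt0 // ?subr_gt0 // ltr_wpDr // exprn_gt0.
    move=> hh h; nra.
  by move: tp; rewrite h1 eqxx.
- move=> h; split; first by rewrite -dE; exact: diff_fobj.
  rewrite (ltr0_sg _) ?subr_lt0 //.
  have : 0 <= c2 * (a ^+ 2 + n%:R) by apply: mulr_ge0; [exact: ltW | exact: addr_ge0 (sqr_ge0 a) hn0].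
  rewrite mulrN; set X := c2 * _; move=> hX. rewrite mulrN1 opprD opprK. apply: (le_trans (y := 0)); [by rewrite oppr_le0 | by rewrite subr_ge0].
Qed.

End Step.

Lemma pow2_unbounded {R : realType} (y : R) : exists j : nat, y < 2 ^+ j.
Proof.
case: (lerP y 0) => hy.
  by exists 0%N; rewrite expr0; lra.
have := archi_boundP (ltW hy); set N := Num.Def.archi_bound y => hN.
exists N; apply: (lt_le_trans hN).
have : (N < 2 ^ N)%N by apply: ltn_expl.
move/ltnW; rewrite -(ler_nat R) natrX => h; exact: h.
Qed.

Definition pow2 {R : realType} (t : R) := exists m : int, t = 2 ^ m.

Section LS.
Context {R : realType} (N : nat) (f : 'rV[R]_N -> R) (c1 c2 : R) (x d : 'rV[R]_N) (u : R).
Hypotheses (hu : 0 < u)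
  (hA : forall t, 0 < t -> t != u -> (armijo f c1 x d t <-> t <= 2 * u))
  (hW : forall t, 0 < t -> t != u -> (wolfe f c2 x d t <-> u < t))
  (hnp : forall m : int, (2 : R) ^ m != u) (hnp2 : forall m : int, (2 : R) ^ m != 2 * u).

Local Notation st := (ls_state f c1 c2 x d).

Lemma ls_first k0 :
  (forall j, (j < k0)%N -> ~ (armijo f c1 x d (st j).2 /\ wolfe f c2 x d (st j).2)) ->
  armijo f c1 x d (st k0).2 -> wolfe f c2 x d (st k0).2 ->
  ls_returns f c1 c2 x d (st k0).2 /\
  forall t, ls_returns f c1 c2 x d t -> t = (st k0).2.
Proof.
move=> hj hA0 hW0; split; first by exists k0.
move=> t [k [<- [hAk [hWk hk]]]].
case: (ltngtP k k0) => [kk0|k0k|-> //].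
- by case: (hj k kk0).
- by case: (hk k0 k0k).
Qed.

Lemma stepA al be t : ~ armijo f c1 x d t ->
  ls_step f c1 c2 x d (al, be, t) = (al, Some t, (al + t) / 2).
Proof. by move=> h; rewrite /ls_step (asboolF h). Qed.

Lemma stepW al be t : armijo f c1 x d t -> ~ wolfe f c2 x d t ->
  ls_step f c1 c2 x d (al, be, t) =
  (t, be, match be with Some b => (t + b) / 2 | None => 2 * t end).
Proof. by move=> h1 h2; rewrite /ls_step (asboolT h1) (asboolF h2). Qed.

Lemma pow_pos (k : nat) : 0 < (2 : R) ^+ k.
Proof. by rewrite exprn_gt0. Qed.

Lemma npu (k : nat) : (2 : R) ^+ k != u.
Proof. exact: (hnp k). Qed.
Lemma npu' (k : nat) : ((2 : R) ^+ k)^-1 != u.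
Proof. by have := hnp (- (k : int)); rewrite -invr_expz. Qed.
Lemma npu2 (k : nat) : (2 : R) ^+ k != 2 * u.
Proof. exact: (hnp2 k). Qed.
Lemma npu2' (k : nat) : ((2 : R) ^+ k)^-1 != 2 * u.
Proof. by have := hnp2 (- (k : int)); rewrite -invr_expz. Qed.

Lemma ls_main : exists t, pow2 t /\ u < t /\ t < 2 * u /\
  ls_returns f c1 c2 x d t /\ forall t', ls_returns f c1 c2 x d t' -> t' = t.
Proof.
case: (ltrgtP u 1) => hu1; last by have := npu 0; rewrite expr0 hu1 eqxx.
- (* u < 1 : halving *)
  have exP : exists j : nat, ((2 : R) ^+ j)^-1 <= 2 * u.
    have [j hj] := pow2_unbounded (2 * u)^-1.
    exists j; rewrite -(invrK (2 * u)) lef_pV2 ?posrE ?pow_pos ?invr_gt0 ?mulr_gt0 //.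
    exact: ltW.
  case: (ex_minnP exP) => j hj hmin.
  have hst : forall k, (k <= j)%N ->
      st k = (0, if k is 0%N then None else Some ((2 ^+ k.-1)^-1), (2 ^+ k)^-1).
    elim=> [|k IH] hk; first by rewrite /ls_state /= expr0 invr1.
    rewrite /ls_state iterS -/(ls_state _ _ _ _ _ k) IH ?(ltnW hk) //.
    rewrite stepA /=; last first.
      rewrite hA ?invr_gt0 ?pow_pos ?npu' //.
      by move=> h; have := hmin k h; rewrite leqNgt hk.
    by rewrite add0r exprS invfM mulrC.
  have hAj : armijo f c1 x d (st j).2.
    by rewrite hst // /= hA ?invr_gt0 ?pow_pos ?npu'.
  have hWj : wolfe f c2 x d (st j).2.
    rewrite hst // /= hW ?invr_gt0 ?pow_pos ?npu' //.
    case: j hj hmin hst hAj => [|j] hj hmin _ _; first by rewrite expr0 invr1.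
    have : ~~ (((2 : R) ^+ j)^-1 <= 2 * u).
      by apply/negP => h; have := hmin j h; rewrite ltnn.
    rewrite -ltNge exprS invfM => h; lra.
  have hfail : forall k, (k < j)%N ->
      ~ (armijo f c1 x d (st k).2 /\ wolfe f c2 x d (st k).2).
    move=> k hk [h _]; move: h; rewrite hst ?(ltnW hk) // /= hA ?invr_gt0 ?pow_pos ?npu' //.
    by move=> h; have := hmin k h; rewrite leqNgt hk.
  have [hr hu'] := ls_first j hfail hAj hWj.
  have p2 : pow2 (st j).2 by rewrite hst //=; exists (- (j : int)); rewrite -invr_expz.
  have l1 : u < (st j).2 by move: hWj; rewrite hst // /= hW ?invr_gt0 ?pow_pos ?npu'.
  have l2 : (st j).2 < 2 * u.
    move: hAj; rewrite hst // /= hA ?invr_gt0 ?pow_pos ?npu' // le_eqVlt.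
    by case/orP => // /eqP h; have := npu2' j; rewrite h eqxx.
  by exists (st j).2.
- (* u > 1 : doubling *)
  have exP : exists j : nat, u < (2 : R) ^+ j by apply: pow2_unbounded.
  case: (ex_minnP exP) => j hj hmin.
  have j0 : (0 < j)%N.
    by case: j hj hmin => // hj; move: hj; rewrite expr0; lra.
  have hst : forall k, (k <= j)%N ->
      st k = (if k is 0%N then 0 else 2 ^+ k.-1, None, 2 ^+ k).
    elim=> [|k IH] hk; first by rewrite /ls_state /= expr0.
    have nk : ~~ (u < (2 : R) ^+ k).
      by apply/negP => h; have := hmin k h; rewrite leqNgt hk.
    move: nk; rewrite -leNgt => nk.
    rewrite /ls_state iterS -/(ls_state _ _ _ _ _ k) IH ?(ltnW hk) //.
    rewrite stepW /=; first by rewrite exprS.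
      by rewrite hA ?pow_pos ?npu //; lra.
    by rewrite hW ?pow_pos ?npu //; lra.
  have hWj : wolfe f c2 x d (st j).2.
    by rewrite hst // /= hW ?pow_pos ?npu.
  have hAj : armijo f c1 x d (st j).2.
    rewrite hst // /= hA ?pow_pos ?npu //.
    case: j hj hmin hst hWj j0 => [|j] // hj hmin _ _ _.
    have : ~~ (u < (2 : R) ^+ j).
      by apply/negP => h; have := hmin j h; rewrite ltnn.
    rewrite -leNgt exprS => h; lra.
  have hfail : forall k, (k < j)%N ->
      ~ (armijo f c1 x d (st k).2 /\ wolfe f c2 x d (st k).2).
    move=> k hk [_ h]; move: h; rewrite hst ?(ltnW hk) // /= hW ?pow_pos ?npu //.
    by move=> h; have := hmin k h; rewrite leqNgt hk.
  have [hr hu'] := ls_first j hfail hAj hWj.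
  have p2 : pow2 (st j).2 by rewrite hst //=; exists (j : int).
  have l1 : u < (st j).2 by move: hWj; rewrite hst // /= hW ?pow_pos ?npu.
  have l2 : (st j).2 < 2 * u.
    move: hAj; rewrite hst // /= hA ?pow_pos ?npu // le_eqVlt.
    by case/orP => // /eqP h; have := npu2 j; rewrite h eqxx.
  by exists (st j).2.
Qed.

End LS.
Section Dy.
Context {R : realType}.
Definition dyadic (u : R) := exists z : int, exists q : nat, u = z%:~R / 2 ^+ q.

Lemma dyadicB u v : dyadic u -> dyadic v -> dyadic (u - v).
Proof.
move=> [z1 [q1 ->]] [z2 [q2 ->]].
exists (z1 * 2 ^+ q2 - z2 * 2 ^+ q1); exists (q1 + q2)%N.
rewrite rmorphB !rmorphM !rmorphXn /= exprD.
have h1 : (2 : R) ^+ q1 != 0 by rewrite expf_neq0.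
have h2 : (2 : R) ^+ q2 != 0 by rewrite expf_neq0.
by field; apply/andP.
Qed.

Lemma dyadic_half u : dyadic u -> dyadic (u / 2).
Proof.
move=> [z [q ->]]; exists z; exists q.+1; rewrite exprS.
have h1 : (2 : R) ^+ q != 0 by rewrite expf_neq0.
by field.
Qed.

Lemma dyadic_pow2 t : pow2 t -> dyadic t.
Proof.
move=> [[k|k] ->].
  exists (2 ^+ k); exists 0%N; rewrite rmorphXn expr0 divr1 //.
exists 1; exists k.+1; rewrite mul1r //.
Qed.

Lemma nondy_pow u : ~ dyadic u -> forall m : int, (2 : R) ^ m != u.
Proof. by move=> h m; apply/eqP => e; apply: h; rewrite -e; apply: dyadic_pow2; exists m. Qed.

Lemma nondy_pow2 u : ~ dyadic u -> forall m : int, (2 : R) ^ m != 2 * u.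
Proof.
move=> h m; apply/eqP => e; apply: h.
have -> : u = (2 : R) ^ m / 2 by rewrite e; field.
by apply/dyadic_half/dyadic_pow2; exists m.
Qed.

Lemma pow2_gt0 (t : R) : pow2 t -> 0 < t.
Proof. by move=> [m ->]; rewrite exprz_gt0. Qed.

Lemma pow2_half (t t' : R) : pow2 t -> pow2 t' -> t' < t -> t' <= t / 2.
Proof.
move=> [m ->] [m' ->]; rewrite ltr_eXz2l ?ltr1n // => hm.
have hm' : m' <= m - 1 by rewrite lerBrDr lezD1.
have -> : (2 : R) ^ m / 2 = 2 ^ (m - 1).
  by rewrite expfzDr // -invr_expz expr1z.
by rewrite ler_eXz2l ?ltr1n.
Qed.
End Dy.
Lemma cvg_rV {R : realType} (m : nat) (u : nat -> 'rV[R]_m) (l : 'rV[R]_m) :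
  (forall j, (fun k => u k 0 j) @ \oo --> l 0 j) -> u @ \oo --> l.
Proof.
move=> H; apply/cvg_ballP => e he.
have h : forall j, \forall k \near \oo, ball (l 0 j) e (u k 0 j).
  by move=> j; move/cvg_ballP: (H j) => /(_ e he).
have hh : \forall k \near \oo, forall j, ball (l 0 j) e (u k 0 j).
  by apply: filter_forall.
apply: filterS hh => k hk.
split => // i j; rewrite (ord1 i); exact: hk j.
Qed.

Lemma conv {R : realType} (n : nat) (a : R) (xs : nat -> 'rV[R]_n.+1) (T : nat -> R) :
  0 < a -> (forall k, 0 < T k) -> (forall k, T k.+1 <= T k / 2) ->
  (forall k, `|xs k 0 ord0| <= a * T k) ->
  (forall k i, xs k.+1 0 (lift ord0 i) = xs k 0 (lift ord0 i) - T k) ->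
  exists xbar : 'rV[R]_n.+1, xs @ \oo --> xbar /\ xbar 0 ord0 = 0.
Proof.
move=> ha hT0 hT2 h0 hS1.
pose S k := \sum_(j < k) T j.
have hS : forall k i, xs k 0 (lift ord0 i) = xs 0%N 0 (lift ord0 i) - S k.
  elim=> [|k IH] i; first by rewrite /S big_ord0 subr0.
  by rewrite hS1 IH /S big_ord_recr /= opprD addrA.
have hT : forall k, T k <= T 0%N / 2 ^+ k.
  elim=> [|k IH]; first by rewrite expr0 divr1.
  apply: (le_trans (hT2 k)); apply: (le_trans (ler_wpM2r _ IH)).
    by rewrite invr_ge0.
  by rewrite -mulrA -invfM -exprSr.
have hb : forall k, S k + 2 * T k <= 2 * T 0%N.
  elim=> [|k IH]; first by rewrite /S big_ord0 add0r.
  rewrite /S big_ord_recr /= -/(S k).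
  have := hT2 k; lra.
have Sinc : {homo S : k m / (k <= m)%N >-> k <= m}.
  apply/nondecreasing_seqP => k; rewrite /S big_ord_recr /= lerDl; exact: ltW.
have Sub : has_ubound (range S).
  exists (2 * T 0%N) => _ [k _ <-]; have := hb k; have := hT0 k; lra.
have cS := nondecreasing_cvgn Sinc Sub.
set l := sup (range S) in cS.
have cT : T @ \oo --> (0 : R).
  apply/cvgrPdist_lt => e he.
  have [K hK] := pow2_unbounded (T 0%N / e).
  exists K => // k /= hk.
  rewrite sub0r normrN gtr0_norm //.
  apply: (le_lt_trans (hT k)).
  have hK' : (2 : R) ^+ K <= 2 ^+ k by rewrite ler_eXn2l // ltr1n.
  have p0 : 0 < (2 : R) ^+ K by rewrite exprn_gt0.
  rewrite ltr_pdivrMr ?exprn_gt0 //.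
  move: hK; rewrite ltr_pdivrMr // => hK.
  by apply: (lt_le_trans hK); rewrite mulrC ler_pM2l.
exists (\row_(i < n.+1) (if i == ord0 then 0 else xs 0%N 0 i - l)).
split; last by rewrite mxE eqxx.
apply: cvg_rV => j; rewrite mxE.
case: (unliftP ord0 j) => [i ->|->]; last first.
  rewrite eqxx.
  apply/cvgrPdist_lt => e he.
  move/cvgrPdist_lt: cT => /(_ (e / a)); rewrite divr_gt0 // => /(_ isT).
  apply: filterS => k /=; rewrite !sub0r !normrN (gtr0_norm (hT0 k)) => hk.
  apply: (le_lt_trans (h0 k)); rewrite mulrC -ltr_pdivlMr //.
have -> : (lift ord0 i == ord0) = false by apply/negbTE; rewrite eq_sym neq_lift.
under eq_fun do rewrite hS.
apply: cvgB; first exact: cvg_cst.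
exact: cS.
Qed.
Lemma geom_sum {R : realType} (eps : R) N :
  \sum_(k < N) eps / 2 ^+ k.+1 = eps - eps / 2 ^+ N.
Proof.
elim: N => [|N IH]; first by rewrite big_ord0 expr0 divr1 subrr.
rewrite big_ord_recr /= IH.
have h : (2 : R) ^+ N != 0 by rewrite expf_neq0.
by rewrite exprS; field.
Qed.

Lemma null_coord0 {R : realType} (n : nat) (c : nat -> R) :
  lebesgue_null [set y : 'rV[R]_n.+1 | exists j, y 0 ord0 = c j].
Proof.
move=> eps heps.
pose dec k := odflt (0%N, 0%N) (unpickle k) : nat * nat.
pose X k : R := 2 * ((dec k).2%:R + 1).
have X0 : forall k, 0 < X k by move=> k; rewrite /X mulr_gt0 // ltr_wpDl.
pose w k := eps / (2 ^+ k.+2 * X k ^+ n).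
have w0 : forall k, 0 <= w k.
  move=> k; rewrite /w divr_ge0 //; first exact: ltW. apply: ltW; rewrite mulr_gt0 // exprn_gt0 //.
pose lo k := \row_(i < n.+1) (if i == ord0 then c (dec k).1 - w k else - ((dec k).2%:R + 1)).
pose hi k := \row_(i < n.+1) (if i == ord0 then c (dec k).1 + w k else (dec k).2%:R + 1).
exists lo, hi; split; [|split].
- move=> k i; rewrite !mxE; case: ifP => _; have := w0 k; have : 0 <= (dec k).2%:R :> R by []; lra.
- move=> y [j hj].
  set M := \sum_(i < n.+1) `|y 0 i|.
  have M0 : 0 <= M by rewrite sumr_ge0.
  have hM : forall i, `|y 0 i| <= M.
    move=> i; rewrite /M (bigD1 i) //= lerDl sumr_ge0 //.
  set m := Num.Def.archi_bound M.
  have hm := archi_boundP M0; rewrite -/m in hm.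
  exists (pickle (j, m)) => //= i.
  rewrite !mxE /dec pickleK /=.
  case: ifP => [/eqP ->|_]; first by rewrite hj; have := w0 (pickle (j, m)); lra.
  have := hM i; rewrite ler_norml => /andP[h1 h2]; apply/andP; split; lra.
- move=> N.
  have hp : forall k, \prod_(i < n.+1) (hi k 0 i - lo k 0 i) = eps / 2 ^+ k.+1.
    move=> k; rewrite big_ord_recl !mxE eqxx.
    rewrite (eq_bigr (fun _ => X k)) => [|i _]; last first.
      have hne : lift ord0 i != ord0 by rewrite eq_sym neq_lift.
      rewrite !mxE (negbTE hne).
      by rewrite /X; ring.
    rewrite prodr_const card_ord /w.
    have h1 : X k ^+ n != 0 by rewrite expf_neq0 // gt_eqF.
    have h2 : (2 : R) ^+ k != 0 by rewrite expf_neq0.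
    by rewrite !exprS; field; rewrite h1 h2.
  under eq_bigr do rewrite hp.
  rewrite geom_sum; have : 0 <= eps / 2 ^+ N by rewrite divr_ge0 ?exprn_ge0 // ltW.
  lra.
Qed.

Lemma nondy_sub {R : realType} (u t : R) : pow2 t -> ~ dyadic u -> ~ dyadic (t - u).
Proof.
move=> pt hu hd; apply: hu.
have -> : u = t - (t - u) by rewrite opprB addrC subrK.
by apply: dyadicB => //; exact: dyadic_pow2.
Qed.

Lemma null_sub {R : realType} (m : nat) (A B : set 'rV[R]_m) :
  lebesgue_null B -> A `<=` B -> lebesgue_null A.
Proof.
move=> hB sAB eps he; have [lo [hi [h1 [h2 h3]]]] := hB eps he.
by exists lo, hi; split => //; split => //; exact: subset_trans sAB h2.
Qed.

Section Step2.
Context {R : realType} (n : nat) (a c1 c2 : R).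
Hypotheses (ha : 0 < a) (han : n%:R <= a ^+ 2) (hc2 : 0 < c2) (hc21 : c2 < 1)
  (htau : c1 * (a ^+ 2 + n%:R) = n%:R).
Variable x : 'rV[R]_n.+1.
Hypothesis x0 : x 0 ord0 != 0.

Lemma step_exists : ~ dyadic (`|x 0 ord0| / a) ->
  exists t, pow2 t /\ `|x 0 ord0| / a < t /\ t < 2 * (`|x 0 ord0| / a) /\
   ls_returns (fobj a) c1 c2 x (- grad (fobj a) x) t /\
   forall t', ls_returns (fobj a) c1 c2 x (- grad (fobj a) x) t' -> t' = t.
Proof.
move=> hnd.
have hu : 0 < `|x 0 ord0| / a by rewrite divr_gt0 // normr_gt0.
apply: ls_main => //; last first.
- exact: nondy_pow2.
- exact: nondy_pow.
- move=> t t0 tu.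
  have htp : t * a != `|x 0 ord0|.
    by apply/eqP => h; move/eqP: tu; apply; rewrite -h mulfK // gt_eqF.
  apply: iff_trans (@wolfe_iff _ n a c2 ha han hc2 hc21 x x0 t (ltW t0) htp) _.
  by rewrite ltr_pdivrMr.
- move=> t t0 tu.
  apply: iff_trans (@armijo_iff _ n a c1 ha htau x x0 t (ltW t0)) _.
  by rewrite mulrA ler_pdivlMr.
Qed.

Lemma next_facts t : `|x 0 ord0| / a < t ->
  let y := x + t *: (- grad (fobj a) x) in
  [/\ y 0 ord0 != 0, `|y 0 ord0| = t * a - `|x 0 ord0| &
      forall i, y 0 (lift ord0 i) = x 0 (lift ord0 i) - t].
Proof.
move=> ht y.
have hp : `|x 0 ord0| < t * a by rewrite -ltr_pdivrMr.
have hy : y 0 ord0 = Num.sg (x 0 ord0) * (`|x 0 ord0| - t * a) by rewrite /y step0.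
split.
- by rewrite hy mulf_neq0 ?sgr_eq0 // subr_eq0 lt_eqF.
- by rewrite hy normrM normr_sg x0 mul1r ltr0_norm ?subr_lt0 // opprB.
- by move=> i; rewrite /y stepS.
Qed.

End Step2.

Theorem corollary2 (R : realType) (n : nat) (a c1 c2 : R) :
  (2 <= n)%N ->
  Num.sqrt (n%:R - 1) <= a ->
  0 < c1 -> c1 < c2 -> c2 < 1 ->
  c1 + (n%:R - 1) * (c1 - 1) / a ^+ 2 = 0 ->
  almost_surely (fun x0 : 'rV[R]_n =>
    (exists xs : nat -> 'rV[R]_n, gd_iterates (fobj a) c1 c2 x0 xs) /\
    forall xs : nat -> 'rV[R]_n, gd_iterates (fobj a) c1 c2 x0 xs ->
      exists xbar : 'rV[R]_n,
        xs @ \oo --> xbar /\ (forall i : 'I_n, val i = 0%N -> xbar 0 i = 0)).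
Proof.
move=> hn hsq hc1 hc12 hc2 htau.
case: n hn hsq htau => [|[|n]] // _ hsq htau.
have en : (n.+2)%:R - 1 = (n.+1)%:R :> R by rewrite -addn1 natrD addrK.
rewrite en in hsq htau.
have hn1 : 0 < (n.+1)%:R :> R by rewrite ltr0n.
have ha : 0 < a by apply: lt_le_trans hsq; rewrite sqrtr_gt0.
have han : (n.+1)%:R <= a ^+ 2.
  have hs0 : 0 <= Num.sqrt ((n.+1)%:R : R) by rewrite sqrtr_ge0.
  have hs2 := sqr_sqrtr (ltW hn1).
  rewrite -hs2; nra.
have htau' : c1 * (a ^+ 2 + (n.+1)%:R) = (n.+1)%:R.
  have a2 : a ^+ 2 != 0 by rewrite expf_neq0 // gt_eqF.
  have h : (c1 + (n.+1)%:R * (c1 - 1) / a ^+ 2) * a ^+ 2 =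
      c1 * (a ^+ 2 + (n.+1)%:R) - (n.+1)%:R by rewrite mulrDl mulfVK //; ring.
  by move: h; rewrite htau mul0r => /esym/subr0_eq.
have hc2p : 0 < c2 by apply: lt_trans hc12.
pose cE (j : nat) : R := match (unpickle j : option (int * nat)) with
  | Some (z, q) => a * (z%:~R / 2 ^+ q) | None => 0 end.
apply: (@null_sub _ _ _ _ (@null_coord0 _ n.+1 cE)) => x0 /= hnP.
case: (pselect (exists j, x0 0 ord0 = cE j)) => // hnE; exfalso; apply: hnP.
have hx0 : x0 0 ord0 != 0.
  apply/eqP => h; apply: hnE; exists (pickle ((0 : int), 0%N)).
  by rewrite /cE pickleK h mul0r mulr0.
have hnd : ~ dyadic (`|x0 0 ord0| / a).
  move=> [z [q hzq]]; apply: hnE.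
  have a0 : a != 0 by rewrite gt_eqF.
  case: (ltrgtP (x0 0 ord0) 0) => hs; last by move: hx0; rewrite hs eqxx.
  - exists (pickle (- z, q)); rewrite /cE pickleK rmorphN mulNr -hzq ltr0_norm //.
    by field.
  - exists (pickle (z, q)); rewrite /cE pickleK -hzq gtr0_norm //.
    by field.
pose inv (y : 'rV[R]_n.+2) := y 0 ord0 != 0 /\ ~ dyadic (`|y 0 ord0| / a).
have stepI : forall y t, inv y ->
    ls_returns (fobj a) c1 c2 y (- grad (fobj a) y) t ->
    inv (y + t *: (- grad (fobj a) y)) /\ [/\ pow2 t,
        `|y 0 ord0| / a < t, t < 2 * (`|y 0 ord0| / a),
        `|(y + t *: (- grad (fobj a) y)) 0 ord0| / a = t - `|y 0 ord0| / a &
        forall i, (y + t *: (- grad (fobj a) y)) 0 (lift ord0 i) = y 0 (lift ord0 i) - t].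
  move=> y t [hy0 hyd] hr.
  have [t' [pt [h1 [h2 [h3 h4]]]]] := @step_exists _ n.+1 a c1 c2 ha han hc2p hc2 htau' y hy0 hyd.
  have {hr} ett : t = t' by exact: h4.
  subst t'.
  have [n0 nabs nl] := @next_facts _ n.+1 a ha y hy0 t h1.
  have e : `|(y + t *: - grad (fobj a) y) 0 ord0| / a = t - `|y 0 ord0| / a.
    by rewrite nabs; field; rewrite gt_eqF.
  split; last by split.
  split => //.
  by rewrite e; exact: nondy_sub.
have exI : forall y, inv y -> exists t, ls_returns (fobj a) c1 c2 y (- grad (fobj a) y) t.
  move=> y [hy0 hyd].
  have [t' [_ [_ [_ [h3 _]]]]] := @step_exists _ n.+1 a c1 c2 ha han hc2p hc2 htau' y hy0 hyd.
  by exists t'.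
split.
- pose nextp (y : 'rV[R]_n.+2) := y + (get [set t | ls_returns (fobj a) c1 c2 y (- grad (fobj a) y) t]) *: (- grad (fobj a) y).
  pose xs k := iter k nextp x0.
  have hI : forall k, inv (xs k).
    elim=> [|k IH]; first by split.
    rewrite /xs iterS -/(xs k) /nextp.
    by have [] := stepI _ _ IH (getPex (exI _ IH)).
  exists xs; split => //; split.
    by move=> k; have [] := hI k => h _; exact: diff_fobj.
  move=> k; exists (get [set t | ls_returns (fobj a) c1 c2 (xs k) (- grad (fobj a) (xs k)) t]).
  split; first exact: (getPex (exI _ (hI k))).
  by rewrite /xs iterS.
- move=> xs [hxs0 [hdiff hstep]].
  case: (choice hstep) => T hT.
  have hI : forall k, inv (xs k).
    elim=> [|k IH]; first by rewrite hxs0.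
    have [hr ->] := hT k.
    by have [] := stepI _ _ IH hr.
  have hF : forall k, [/\ pow2 (T k),
        `|xs k 0 ord0| / a < T k, T k < 2 * (`|xs k 0 ord0| / a),
        `|xs k.+1 0 ord0| / a = T k - `|xs k 0 ord0| / a &
        forall i, xs k.+1 0 (lift ord0 i) = xs k 0 (lift ord0 i) - T k].
    move=> k; have [hr ->] := hT k.
    by have [_ []] := stepI _ _ (hI k) hr.
  have [xbar [cx hx]] : exists xbar : 'rV[R]_n.+2, xs @ \oo --> xbar /\ xbar 0 ord0 = 0.
    apply: (@conv _ n.+1 a xs T) => //.
    + by move=> k; have [pt _ _ _ _] := hF k; exact: pow2_gt0.
    + move=> k.
      have [pt h1 h2 h3 _] := hF k.
      have [pt' h1' h2' h3' _] := hF k.+1.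
      apply: pow2_half => //.
      rewrite h3 in h2'; lra.
    + move=> k; have [_ h1 _ _ _] := hF k.
      by move: h1; rewrite ltr_pdivrMr // mulrC => /ltW.
    + by move=> k i; have [_ _ _ _ h] := hF k.
  exists xbar; split => // i hi.
  by have -> : i = ord0 by apply: val_inj.
Qed.
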